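(* Let $g\in{\cal H}_d$. Call a compact set $V\subset{\bf C}^2$ admissible if $K\subset \mathrm{int}\,V$, $g(J^+\cap V)\subset J^+\cap V$ and $g^{-1}(J^-\cap V)\subset J^-\cap V$. For admissible $V$ define $$s^\pm(V)=\lim_{n\to\infty}\frac1n\log\max\{\|Dg^{\pm n}(p)\|:p\in J^\pm\cap V\}.$$ Then $s^+(V)$ and $s^-(V)$ do not depend on the choice of the admissible set $V$.
   Context: A generalized Hénon map is a map $g_i(z,w)=(w,P_i(w)+a_iz)$ of ${\bf C}^2$, where $P_i$ is a complex polynomial of degree $d_i\ge 2$ and $a_i\in{\bf C}\setminus\{0\}$. For $d\ge 2$, ${\cal H}_d$ denotes the set of all finite compositions $g=g_1\circ\cdots\circ g_m$ of generalized Hénon maps with $d_1\cdots d_m=d$. $K^\pm$ is the set of points whose forward ($+$) resp. backward ($-$) orbit under $g$ is bounded, $K=K^+\cap K^-$, $J^\pm=\partial K^\pm$. The limits defining $s^\pm(V)$ exist (submultiplicativity) and do not depend on the norm used. *)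

(* Defs.v *)
From Stdlib Require Import Reals List.
From Coquelicot Require Import Coquelicot.
Set Implicit Arguments.

Definition C2 := prod_NormedModule C_AbsRing C_NormedModule C_NormedModule.

(* A complex polynomial is given by its list of coefficients, lowest degree
   first: [c0; c1; ...; ck] represents c0 + c1 w + ... + ck w^k. *)
Definition peval (P : list C) (w : C) : C :=
  fold_right (fun c acc => Cplus c (Cmult w acc)) (RtoC 0) P.

Definition has_degree (P : list C) (k : nat) : Prop :=
  length P = S k /\ last P (RtoC 0) <> RtoC 0.

Definition henon (P : list C) (a : C) (p : C2) : C2 :=
  (snd p, Cplus (peval P (snd p)) (Cmult a (fst p))).

Definition henon_data (Pa : list C * C) : Prop :=
  (exists k, (2 <= k)%nat /\ has_degree (fst Pa) k) /\ snd Pa <> RtoC 0.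

Definition deg_of (P : list C) : nat := pred (length P).

(* g_1 o g_2 o ... o g_m for the list [(P_1,a_1); ...; (P_m,a_m)]. *)
Definition henon_comp (l : list (list C * C)) : C2 -> C2 :=
  fold_right (fun Pa f => fun p => henon (fst Pa) (snd Pa) (f p)) (fun p => p) l.

Definition in_Hd (d : nat) (g : C2 -> C2) : Prop :=
  exists l : list (list C * C),
    List.Forall henon_data l /\
    fold_right (fun Pa n => (deg_of (fst Pa) * n)%nat) 1%nat l = d /\
    (forall p, g p = henon_comp l p).

(* Set of points with bounded orbit under f (f = g gives K^+, f = g^{-1} gives K^-). *)
Definition bounded_orbit (f : C2 -> C2) (p : C2) : Prop :=
  exists M : R, forall n : nat, norm (Nat.iter n f p) <= M.

Definition boundary (A : C2 -> Prop) (p : C2) : Prop :=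
  forall eps : posreal,
    (exists q, ball p eps q /\ A q) /\ (exists q, ball p eps q /\ ~ A q).

Definition interior (A : C2 -> Prop) (p : C2) : Prop :=
  exists eps : posreal, forall q, ball p eps q -> A q.

Definition is_compact (V : C2 -> Prop) : Prop :=
  forall (I : Type) (U : I -> C2 -> Prop),
    (forall i, open (U i)) ->
    (forall p, V p -> exists i, U i p) ->
    exists l : list I, forall p, V p -> exists i, In i l /\ U i p.

Definition opnorm (L : C2 -> C2) : Rbar :=
  Lub_Rbar (fun r => exists v : C2, norm v <= 1 /\ r = norm (L v)).

Definition maxDer (f : C2 -> C2) (J V : C2 -> Prop) (n : nat) : R :=
  real (Lub_Rbar (fun r => exists p, J p /\ V p /\
          exists L : C2 -> C2,
            filterdiff (K := C_AbsRing) (Nat.iter n f) (locally p) L /\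
            r = real (opnorm L))).

Definition s_exp (f : C2 -> C2) (J V : C2 -> Prop) : Rbar :=
  Lim_seq (fun n => / INR n * ln (maxDer f J V n)).

Definition Kplus (g : C2 -> C2) : C2 -> Prop := bounded_orbit g.
Definition Kminus (ginv : C2 -> C2) : C2 -> Prop := bounded_orbit ginv.
Definition Kset (g ginv : C2 -> C2) (p : C2) : Prop := Kplus g p /\ Kminus ginv p.
Definition Jplus (g : C2 -> C2) : C2 -> Prop := boundary (Kplus g).
Definition Jminus (ginv : C2 -> C2) : C2 -> Prop := boundary (Kminus ginv).

Definition admissible (g ginv : C2 -> C2) (V : C2 -> Prop) : Prop :=
  is_compact V /\
  (forall p, Kset g ginv p -> interior V p) /\
  (forall p, Jplus g p -> V p -> Jplus g (g p) /\ V (g p)) /\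
  (forall p, Jminus ginv p -> V p -> Jminus ginv (ginv p) /\ V (ginv p)).

Definition splus (g ginv : C2 -> C2) (V : C2 -> Prop) : Rbar :=
  s_exp g (Jplus g) V.
Definition sminus (g ginv : C2 -> C2) (V : C2 -> Prop) : Rbar :=
  s_exp ginv (Jminus ginv) V.

(* Main.v *)
From Stdlib Require Import Reals List Lra Psatz Classical Arith Lia ZArith.
From Coquelicot Require Import Coquelicot.
Require Import Defs.
Open Scope R_scope.


Lemma n2_def (p : C2) : norm p = sqrt (Cmod (fst p) ^ 2 + Cmod (snd p) ^ 2).
Proof. reflexivity. Qed.
Lemma scal2_def (k : C) (p : C2) : scal (V:=C2) k p = (Cmult k (fst p), Cmult k (snd p)).
Proof. reflexivity. Qed.

Lemma n2_fst (p : C2) : Cmod (fst p) <= norm p.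
Proof.
  rewrite n2_def. rewrite <- (sqrt_pow2 (Cmod (fst p))) at 1 by apply Cmod_ge_0.
  apply sqrt_le_1_alt. pose proof (pow2_ge_0 (Cmod (snd p))). lra.
Qed.
Lemma n2_snd (p : C2) : Cmod (snd p) <= norm p.
Proof.
  rewrite n2_def. rewrite <- (sqrt_pow2 (Cmod (snd p))) at 1 by apply Cmod_ge_0.
  apply sqrt_le_1_alt. pose proof (pow2_ge_0 (Cmod (fst p))). lra.
Qed.
Lemma n2_le_sum (p : C2) : norm p <= Cmod (fst p) + Cmod (snd p).
Proof.
  rewrite n2_def. pose proof (Cmod_ge_0 (fst p)). pose proof (Cmod_ge_0 (snd p)).
  rewrite <- (sqrt_pow2 (Cmod (fst p) + Cmod (snd p))) by lra.
  apply sqrt_le_1_alt. nra.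
Qed.
Lemma n2_scal (k : C) (p : C2) : norm (scal k p) = Cmod k * norm p.
Proof.
  rewrite scal2_def, !n2_def. simpl fst; simpl snd. rewrite !Cmod_mult.
  transitivity (sqrt (Cmod k ^ 2 * (Cmod (fst p) ^ 2 + Cmod (snd p) ^ 2))).
  { apply (f_equal sqrt). destruct p as [a b]. simpl. ring. }
  rewrite (sqrt_mult_alt (Cmod k ^ 2)) by apply pow2_ge_0. rewrite sqrt_pow2 by apply Cmod_ge_0. reflexivity.
Qed.

Lemma norm_e1 : norm ((RtoC 1, RtoC 0) : C2) = 1.
Proof.
  rewrite n2_def; simpl fst; simpl snd. rewrite Cmod_1, Cmod_0.
  replace (1 ^ 2 + 0 ^ 2) with 1 by ring. apply sqrt_1.
Qed.

Lemma lin_zero (L : C2 -> C2) : is_linear L -> L zero = zero.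
Proof.
  intros HL.
  assert (E : forall x : C2, scal (zero : AbsRing.Ring C_AbsRing) x = zero) by (intro; apply scal_zero_l).
  pose proof (linear_scal L HL (zero : AbsRing.Ring C_AbsRing) zero) as H.
  rewrite !E in H. exact H.
Qed.

Lemma opnorm_bound (L : C2 -> C2) (B : R) : 0 <= B -> is_linear L ->
  (forall v, norm (L v) <= B * norm v) ->
  exists x, opnorm L = Finite x /\ x <= B /\ (forall v, norm v <= 1 -> norm (L v) <= x).
Proof.
  intros HB HL Hb. unfold opnorm.
  destruct (Lub_Rbar_correct (fun r => exists v : C2, norm v <= 1 /\ r = norm (L v))) as [Hub Hl].
  set (l := Lub_Rbar _) in *.
  assert (H0 : Rbar_le (norm (L zero)) l).
  { apply Hub. exists zero. rewrite norm_zero. split; [lra|reflexivity]. }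
  assert (H1 : Rbar_le l B).
  { apply Hl. intros r [v [Hv ->]]. simpl. specialize (Hb v). nra. }
  destruct l as [x| |]; simpl in H0, H1; try contradiction.
  exists x. split; [reflexivity|]. split; [exact H1|].
  intros v Hv. specialize (Hub (norm (L v))). simpl in Hub. apply Hub. exists v; auto.
Qed.

Lemma opnorm_scale (L : C2 -> C2) (x : R) : is_linear L -> opnorm L = Finite x ->
  forall v, norm (L v) <= x * norm v.
Proof.
  intros HL Hx v. unfold opnorm in Hx.
  destruct (Lub_Rbar_correct (fun r => exists v : C2, norm v <= 1 /\ r = norm (L v))) as [Hub _].
  rewrite Hx in Hub.
  destruct (Req_dec (norm v) 0) as [H0|H0].
  - apply norm_eq_zero in H0. subst v. rewrite (lin_zero L HL), !norm_zero. lra.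
  - pose proof (norm_ge_0 v).
    set (k := RtoC (/ norm v)).
    assert (Hk : Cmod k = / norm v). { unfold k. rewrite Cmod_R. apply Rabs_pos_eq. apply Rlt_le, Rinv_0_lt_compat. lra. }
    assert (Hn : norm (scal k v) = 1). { rewrite n2_scal, Hk. field. lra. }
    specialize (Hub (norm (L (scal k v)))). simpl in Hub.
    assert (norm (L (scal k v)) <= x) by (apply Hub; exists (scal k v); split; [lra|reflexivity]).
    rewrite (linear_scal L HL), n2_scal, Hk in H1.
    apply Rmult_le_reg_l with (/ norm v). apply Rinv_0_lt_compat; lra.
    replace (/ norm v * (x * norm v)) with x by (field; lra). lra.
Qed.
Ltac c2alg :=
  unfold minus, plus, opp, scal; simpl; unfold prod_plus, prod_opp, prod_scal; simpl;
  unfold plus, opp, scal, mult; simpl; unfold mult; simpl;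
  apply injective_projections; simpl; match goal with |- @eq _ ?a ?b => change (@eq C a b) end; ring.

Lemma alg1 (a b c : C2) : minus (minus a b) (minus a c) = minus c b.
Proof. c2alg. Qed.
Lemma alg2 (x h : C2) : minus (plus x h) x = h.
Proof. c2alg. Qed.
Lemma alg3 (k : C) (a b : C2) : minus (scal k a) (scal k b) = scal k (minus a b).
Proof. c2alg. Qed.
Lemma alg4 (a b : C2) : minus a b = zero -> a = b.
Proof. intro H. assert (E : a = plus (minus a b) b) by c2alg. rewrite E, H. apply plus_zero_l. Qed.

Lemma fd_unique (f : C2 -> C2) (x : C2) (L1 L2 : C2 -> C2) :
  filterdiff f (locally x) L1 -> filterdiff f (locally x) L2 -> forall v, L1 v = L2 v.
Proof.
  intros [HL1 D1] [HL2 D2] v.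
  assert (Hx : is_filter_lim (locally x) x) by (intros P HP; exact HP).
  set (w := minus (L1 v) (L2 v)).
  assert (Hc : forall eps : posreal, norm w <= eps * norm v).
  { intros eps.
    assert (He2 : 0 < eps / 2) by (destruct eps; simpl; lra).
    pose proof (D1 x Hx (mkposreal _ He2)) as H1.
    pose proof (D2 x Hx (mkposreal _ He2)) as H2.
    destruct (filter_and _ _ H1 H2) as [d Hd].
    pose proof (norm_ge_0 v) as Hv0.
    set (t := d / (2 * (norm v + 1))).
    assert (Ht : 0 < t) by (unfold t; destruct d; simpl; apply Rdiv_lt_0_compat; lra).
    set (y := plus x (scal (RtoC t) v)).
    assert (Hyx : minus y x = scal (RtoC t) v) by apply alg2.
    assert (Hct : Cmod (RtoC t) = t) by (rewrite Cmod_R; apply Rabs_pos_eq; lra).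
    assert (Hb : ball x d y).
    { apply norm_compat1. rewrite Hyx, n2_scal, Hct.
      unfold t. destruct d as [d dp]; simpl.
      apply Rle_lt_trans with (d / (2 * (norm v + 1)) * (norm v + 1)).
      apply Rmult_le_compat_l. apply Rlt_le, Rdiv_lt_0_compat; lra. lra.
      replace (d / (2 * (norm v + 1)) * (norm v + 1)) with (d / 2) by (field; lra). lra. }
    destruct (Hd y Hb) as [E1 E2]. simpl in E1, E2.
    rewrite Hyx in E1, E2.
    assert (Hw : minus (minus (minus (f y) (f x)) (L2 (scal (RtoC t) v)))
                        (minus (minus (f y) (f x)) (L1 (scal (RtoC t) v)))
               = scal (RtoC t) w).
    { rewrite alg1, (linear_scal L1 HL1), (linear_scal L2 HL2). apply alg3. }
    assert (Hn : norm (scal (RtoC t) w) <= eps * norm (scal (RtoC t) v)).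
    { rewrite <- Hw. unfold minus at 1.
      eapply Rle_trans. apply norm_triangle. rewrite norm_opp.
      replace (pos eps) with (eps / 2 + eps / 2) by field. lra. }
    rewrite !n2_scal, Hct in Hn.
    apply Rmult_le_reg_l with t; [exact Ht|]. lra. }
  apply alg4. apply norm_eq_zero.
  apply Rle_antisym; [|apply norm_ge_0]. change (norm w <= 0).
  destruct (Req_dec (norm v) 0) as [Hv|Hv].
  - specialize (Hc (mkposreal 1 Rlt_0_1)). simpl in Hc. rewrite Hv in Hc. lra.
  - apply Rnot_lt_le. intro Hpos. pose proof (norm_ge_0 v).
    assert (He : 0 < norm w / (2 * norm v)) by (apply Rdiv_lt_0_compat; lra).
    specialize (Hc (mkposreal _ He)). simpl in Hc.
    replace (norm w / (2 * norm v) * norm v) with (norm w / 2) in Hc by (field; lra). lra.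
Qed.


Lemma C_comm : forall n m : C_AbsRing, mult n m = mult m n.
Proof. intros; apply Cmult_comm. Qed.

Fixpoint dpeval (P : list C) (w : C) : C :=
  match P with nil => RtoC 0 | c :: P' => Cplus (peval P' w) (Cmult w (dpeval P' w)) end.

Lemma idC_lin : is_linear (K:=C_AbsRing) (U:=C_NormedModule) (V:=AbsRing_NormedModule C_AbsRing) (fun w => w).
Proof.
  split; try (intros; reflexivity).
  exists 1. split; [lra|]. intros x. change (Cmod x <= 1 * Cmod x). lra.
Qed.

Lemma peval_fd (P : list C) (w0 : C) :
  filterdiff (K := C_AbsRing) (U := C_NormedModule) (V := C_NormedModule)
    (peval P) (locally w0) (fun v => Cmult v (dpeval P w0)).
Proof.
  induction P as [|c P IH]; simpl.
  - eapply filterdiff_ext_lin. apply (filterdiff_const (K:=C_AbsRing) (U:=C_NormedModule) (V:=C_NormedModule) (RtoC 0)).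
    intro y. change (RtoC 0 = Cmult y (RtoC 0)). ring.
  - eapply filterdiff_ext_lin.
    + eapply filterdiff_ext with (f := fun w : C_NormedModule => plus (c : C_NormedModule) (scal (K:=C_AbsRing) (w : C_AbsRing) (peval P w : C_NormedModule))).
      { intro y. reflexivity. }
      apply filterdiff_plus_fct.
      apply filterdiff_const.
      apply (filterdiff_scal_fct (K := C_AbsRing) (U := C_NormedModule) (V := C_NormedModule) w0 (fun w => w) (peval P)); [apply C_comm| |exact IH].
      apply filterdiff_linear. apply idC_lin.
    + intro y. simpl. change (Cplus (RtoC 0) (Cplus (Cmult y (peval P w0)) (Cmult w0 (Cmult y (dpeval P w0))))
        = Cmult y (Cplus (peval P w0) (Cmult w0 (dpeval P w0)))). ring.
Qed.

Lemma snd_lin : is_linear (K:=C_AbsRing) (U:=C2) (V:=C_NormedModule) (fun p => snd p).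
Proof.
  split; try (intros; reflexivity).
  exists 1. split; [lra|]. intros x. rewrite Rmult_1_l. apply n2_snd.
Qed.
Lemma fst_lin : is_linear (K:=C_AbsRing) (U:=C2) (V:=C_NormedModule) (fun p => fst p).
Proof.
  split; try (intros; reflexivity).
  exists 1. split; [lra|]. intros x. rewrite Rmult_1_l. apply n2_fst.
Qed.
Lemma pair_lin : is_linear (K:=C_AbsRing) (U:=C2) (V:=C2) (fun t => (fst t, snd t)).
Proof.
  split; try (intros; reflexivity).
  exists 1. split; [lra|]. intros x. rewrite Rmult_1_l. apply Rle_refl.
Qed.

Definition dhenon (P : list C) (a : C) (q : C2) (v : C2) : C2 :=
  (snd v, Cplus (Cmult (snd v) (dpeval P (snd q))) (Cmult a (fst v))).

Lemma henon_fd (P : list C) (a : C) (q : C2) :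
  filterdiff (K:=C_AbsRing) (U:=C2) (V:=C2) (henon P a) (locally q) (dhenon P a q).
Proof.
  apply filterdiff_ext with (f := fun y : C2 => (fun u v => (u, v) : C2) (snd y)
            (plus (peval P (snd y) : C_NormedModule) (scal (K:=C_AbsRing) a (fst y : C_NormedModule)))).
  { intro y. reflexivity. }
  apply filterdiff_ext_lin with (l1 := fun y : C2 => (fun u v => (u, v) : C2) (snd y)
            (plus (Cmult (snd y) (dpeval P (snd q)) : C_NormedModule) (scal (K:=C_AbsRing) a (fst y : C_NormedModule)))).
  2:{ intro y. reflexivity. }
  apply (filterdiff_comp'_2 (K:=C_AbsRing) (T:=C2) (U:=C_NormedModule) (V:=C_NormedModule) (W:=C2)).
  - apply filterdiff_linear. apply snd_lin.
  - apply filterdiff_plus_fct.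
    + apply (filterdiff_comp' (K:=C_AbsRing) (U:=C2) (V:=C_NormedModule) (W:=C_NormedModule) (fun p => snd p) (peval P) q (fun p => snd p) (fun v => Cmult v (dpeval P (snd q)))).
      apply filterdiff_linear. apply snd_lin. apply peval_fd.
    + apply (filterdiff_comp' (K:=C_AbsRing) (U:=C2) (V:=C_NormedModule) (W:=C_NormedModule) (fun p => fst p) (fun x => scal a x) q (fun p => fst p) (fun x => scal a x)).
      apply filterdiff_linear. apply fst_lin. apply (filterdiff_scal_r (K:=C_AbsRing) (V:=C_NormedModule)). apply C_comm.
  - apply filterdiff_linear. apply pair_lin.
Qed.

Definition GD (f : C2 -> C2) (q : C2) (M m : R) : Prop :=
  exists L, filterdiff (K:=C_AbsRing) (U:=C2) (V:=C2) f (locally q) L /\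
    (forall v, norm (L v) <= M * norm v) /\ (forall v, m * norm v <= norm (L v)).

Definition Good (f : C2 -> C2) : Prop :=
  (forall R, exists R', forall q, norm q <= R -> norm (f q) <= R') /\
  (forall R, exists M m, 0 < M /\ 0 < m /\ forall q, norm q <= R -> GD f q M m).

Lemma GD_comp f h q M1 m1 M2 m2 : 0 <= M2 -> 0 <= m2 ->
  GD f q M1 m1 -> GD h (f q) M2 m2 -> GD (fun y => h (f y)) q (M2 * M1) (m2 * m1).
Proof.
  intros HM Hm [L1 [H1 [U1 W1]]] [L2 [H2 [U2 W2]]].
  exists (fun v => L2 (L1 v)). split; [|split].
  - apply filterdiff_comp'; assumption.
  - intro v. eapply Rle_trans. apply U2. rewrite Rmult_assoc. apply Rmult_le_compat_l; auto.
  - intro v. eapply Rle_trans; [|apply W2]. rewrite Rmult_assoc. apply Rmult_le_compat_l; auto.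
Qed.

Lemma Good_comp f h : Good f -> Good h -> Good (fun y => h (f y)).
Proof.
  intros [Bf Df] [Bh Dh]. split.
  - intro R. destruct (Bf R) as [R1 HR1]. destruct (Bh R1) as [R2 HR2].
    exists R2. intros q Hq. apply HR2, HR1, Hq.
  - intro R. destruct (Bf R) as [R1 HR1].
    destruct (Df R) as [M1 [m1 [HM1 [Hm1 G1]]]]. destruct (Dh R1) as [M2 [m2 [HM2 [Hm2 G2]]]].
    exists (M2 * M1), (m2 * m1). split; [nra|]. split; [nra|].
    intros q Hq. apply GD_comp; try lra. apply G1, Hq. apply G2, HR1, Hq.
Qed.

Lemma Good_ext f h : Good f -> (forall y, f y = h y) -> Good h.
Proof.
  intros [Bf Df] E. split.
  - intro R. destruct (Bf R) as [R1 HR1]. exists R1. intros q Hq. rewrite <- E. auto.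
  - intro R. destruct (Df R) as [M [m [HM [Hm G]]]]. exists M, m. split; [auto|split; [auto|]].
    intros q Hq. destruct (G q Hq) as [L [HL HH]]. exists L. split; auto.
    apply filterdiff_ext with f; auto.
Qed.

Lemma Good_id : Good (fun y => y).
Proof.
  split.
  - intro R. exists R. auto.
  - intro R. exists 1, 1. split; [lra|split;[lra|]]. intros q _. exists (fun v => v).
    split; [apply filterdiff_id|]. split; intro v; lra.
Qed.

Definition swap2 (p : C2) : C2 := (snd p, fst p).

Lemma swap_lin : is_linear (K:=C_AbsRing) (U:=C2) (V:=C2) swap2.
Proof.
  split; try (intros; reflexivity).
  exists 1. split; [lra|]. intros x. rewrite Rmult_1_l. rewrite !n2_def. unfold swap2; simpl.
  rewrite Rplus_comm. apply Rle_refl.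
Qed.

Lemma norm_swap (v : C2) : norm (swap2 v) = norm v.
Proof. rewrite !n2_def. unfold swap2; simpl. rewrite Rplus_comm. reflexivity. Qed.

Lemma Good_swap : Good swap2.
Proof.
  split.
  - intro R. exists R. intros q Hq. rewrite norm_swap. auto.
  - intro R. exists 1, 1. split; [lra|split;[lra|]]. intros q _. exists swap2.
    split; [apply filterdiff_linear, swap_lin|]. split; intro v; rewrite norm_swap; lra.
Qed.

Lemma Cmod_minus_le (x y : C) : Cmod (Cminus x y) <= Cmod x + Cmod y.
Proof. unfold Cminus. eapply Rle_trans. apply Cmod_triangle. rewrite Cmod_opp. lra. Qed.

Lemma peval_bound (P : list C) (R : R) : 0 <= R -> exists B, 0 <= B /\
  forall w, Cmod w <= R -> Cmod (peval P w) <= B /\ Cmod (dpeval P w) <= B.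
Proof.
  intros HR. induction P as [|c P [B [HB IH]]].
  - exists 0. split; [lra|]. intros w _. simpl. rewrite Cmod_0. lra.
  - exists (Cmod c + B + R * B). pose proof (Cmod_ge_0 c).
    split; [nra|]. intros w Hw. destruct (IH w Hw) as [H1 H2]. pose proof (Cmod_ge_0 w).
    simpl. split.
    + eapply Rle_trans. apply Cmod_triangle. rewrite Cmod_mult.
      assert (Cmod w * Cmod (peval P w) <= R * B) by (apply Rmult_le_compat; auto using Cmod_ge_0). nra.
    + eapply Rle_trans. apply Cmod_triangle. rewrite Cmod_mult.
      assert (Cmod w * Cmod (dpeval P w) <= R * B) by (apply Rmult_le_compat; auto using Cmod_ge_0). nra.
Qed.

Lemma Good_henon (P : list C) (a : C) : a <> RtoC 0 -> Good (henon P a).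
Proof.
  intros Ha. assert (Ha' : 0 < Cmod a) by (apply Cmod_gt_0; exact Ha).
  split.
  - intro R. set (R0 := Rmax R 0). assert (HR0 : 0 <= R0) by apply Rmax_r.
    destruct (peval_bound P R0 HR0) as [B [HB HPB]].
    exists (R0 + B + Cmod a * R0). intros [z w] Hq.
    assert (Hq0 : norm ((z, w) : C2) <= R0) by (eapply Rle_trans; [exact Hq| apply Rmax_l]).
    pose proof (n2_fst (z, w)) as Hz. pose proof (n2_snd (z, w)) as Hw. change (Cmod z <= norm ((z,w):C2)) in Hz; change (Cmod w <= norm ((z,w):C2)) in Hw.
    destruct (HPB w) as [H1 _]. lra.
    eapply Rle_trans. apply n2_le_sum. unfold henon; simpl.
    assert (Cmod (Cplus (peval P w) (Cmult a z)) <= B + Cmod a * R0).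
    { eapply Rle_trans. apply Cmod_triangle. rewrite Cmod_mult.
      assert (Cmod a * Cmod z <= Cmod a * R0) by (apply Rmult_le_compat_l; lra). lra. }
    lra.
  - intro R. set (R0 := Rmax R 0). assert (HR0 : 0 <= R0) by apply Rmax_r.
    destruct (peval_bound P R0 HR0) as [B [HB HPB]].
    set (k := 1 + (1 + B) / Cmod a).
    assert (Hk : 0 < k) by (unfold k; assert (0 <= (1 + B) / Cmod a) by (apply Rdiv_le_0_compat; lra); lra).
    exists (1 + B + Cmod a), (/ k). split; [lra|]. split; [apply Rinv_0_lt_compat; exact Hk|].
    intros q Hq. exists (dhenon P a q). split; [apply henon_fd|].
    assert (Hq0 : norm q <= R0) by (eapply Rle_trans; [exact Hq| apply Rmax_l]).
    pose proof (n2_snd q). destruct (HPB (snd q)) as [_ HD]. lra.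
    set (D := dpeval P (snd q)) in *.
    assert (Ed : forall v, dhenon P a q v = (snd v, Cplus (Cmult (snd v) D) (Cmult a (fst v)))) by reflexivity.
    clearbody D.
    split; intros [v1 v2]; pose proof (n2_fst (v1, v2)) as V1; pose proof (n2_snd (v1, v2)) as V2; pose proof (Cmod_ge_0 D);
      pose proof (Cmod_ge_0 v1); pose proof (Cmod_ge_0 v2);
      change (Cmod v1 <= norm ((v1,v2):C2)) in V1; change (Cmod v2 <= norm ((v1,v2):C2)) in V2.
    + rewrite Ed. eapply Rle_trans. apply n2_le_sum.
      change (Cmod v2 + Cmod (Cplus (Cmult v2 D) (Cmult a v1)) <= (1 + B + Cmod a) * norm ((v1,v2):C2)).
      assert (Cmod (Cplus (Cmult v2 D) (Cmult a v1)) <= B * norm ((v1, v2) : C2) + Cmod a * norm ((v1, v2) : C2)).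
      { eapply Rle_trans. apply Cmod_triangle. rewrite !Cmod_mult.
        assert (Cmod v2 * Cmod D <= norm ((v1, v2) : C2) * B) by (apply Rmult_le_compat; lra).
        assert (Cmod a * Cmod v1 <= Cmod a * norm ((v1, v2) : C2)) by (apply Rmult_le_compat_l; lra). lra. }
      lra.
    + set (y2 := Cplus (Cmult v2 D) (Cmult a v1)).
      assert (Ew : dhenon P a q (v1, v2) = (v2, y2)) by (rewrite Ed; reflexivity). rewrite Ew.
      assert (E2 : Cmult a v1 = Cminus y2 (Cmult v2 D)) by (unfold y2; ring).
      pose proof (n2_fst ((v2, y2) : C2)) as W1. pose proof (n2_snd ((v2, y2) : C2)) as W2. change (Cmod v2 <= norm ((v2,y2):C2)) in W1; change (Cmod y2 <= norm ((v2,y2):C2)) in W2.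
      set (nw := norm ((v2, y2) : C2)) in *.
      assert (Hf : Cmod a * Cmod v1 <= nw + nw * B).
      { rewrite <- Cmod_mult, E2. eapply Rle_trans. apply Cmod_minus_le. rewrite Cmod_mult.
        assert (Cmod v2 * Cmod D <= nw * B) by (apply Rmult_le_compat; lra). lra. }
      assert (Hf' : Cmod v1 <= (1 + B) / Cmod a * nw).
      { apply Rmult_le_reg_l with (Cmod a); [exact Ha'|].
        replace (Cmod a * ((1 + B) / Cmod a * nw)) with (nw + nw * B) by (field; lra). exact Hf. }
      assert (Hnv : norm ((v1, v2) : C2) <= k * nw).
      { eapply Rle_trans. apply n2_le_sum. change (Cmod v1 + Cmod v2 <= k * nw). unfold k. nra. }
      apply Rmult_le_reg_l with k; [exact Hk|]. rewrite <- Rmult_assoc, Rinv_r by lra. lra.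
Qed.

Definition hinv (P : list C) (a : C) (p : C2) : C2 :=
  swap2 (henon (map (fun c => Cmult (Copp (Cinv a)) c) P) (Cinv a) (swap2 p)).

Lemma peval_map (k : C) (P : list C) (w : C) :
  peval (map (fun c => Cmult k c) P) w = Cmult k (peval P w).
Proof. induction P as [|c P IH]; simpl. ring. rewrite IH. ring. Qed.

Lemma henon_hinv (P : list C) (a : C) (p : C2) : a <> RtoC 0 -> henon P a (hinv P a p) = p.
Proof.
  intros Ha. destruct p as [x y]. unfold hinv, henon, swap2; simpl. rewrite peval_map.
  f_equal. field. exact Ha.
Qed.

Lemma Cinv_nz (a : C) : a <> RtoC 0 -> Cinv a <> RtoC 0.
Proof.
  intros Ha H. assert (E : Cmult a (Cinv a) = RtoC 1) by (apply Cinv_r; exact Ha).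
  rewrite H, Cmult_0_r in E. injection E. lra.
Qed.

Fixpoint invcomp (l : list (list C * C)) (p : C2) : C2 :=
  match l with nil => p | Pa :: l' => invcomp l' (hinv (fst Pa) (snd Pa) p) end.

Lemma comp_invcomp (l : list (list C * C)) (p : C2) :
  List.Forall henon_data l -> henon_comp l (invcomp l p) = p.
Proof.
  intros H. revert p. induction H as [|Pa l HPa Hl IH]; intro p; simpl. reflexivity.
  rewrite IH. apply henon_hinv. apply HPa.
Qed.

Lemma Good_hinv (P : list C) (a : C) : a <> RtoC 0 -> Good (hinv P a).
Proof.
  intros Ha. unfold hinv.
  apply (Good_comp (fun y => henon (map (fun c => Cmult (Copp (Cinv a)) c) P) (Cinv a) (swap2 y)) swap2).
  apply (Good_comp swap2). apply Good_swap. apply Good_henon. apply Cinv_nz, Ha. apply Good_swap.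
Qed.

Lemma Good_henon_comp (l : list (list C * C)) : List.Forall henon_data l -> Good (henon_comp l).
Proof.
  intros H. induction H as [|Pa l HPa Hl IH]; simpl.
  - apply Good_id.
  - apply (Good_comp (henon_comp l) (henon (fst Pa) (snd Pa))). exact IH. apply Good_henon, HPa.
Qed.

Lemma Good_invcomp (l : list (list C * C)) : List.Forall henon_data l -> Good (invcomp l).
Proof.
  intros H. induction H as [|Pa l HPa Hl IH]; simpl.
  - apply Good_id.
  - apply (Good_comp (hinv (fst Pa) (snd Pa)) (invcomp l)). apply Good_hinv, HPa. exact IH.
Qed.

Lemma Good_cont (f : C2 -> C2) : Good f -> forall x, continuous f x.
Proof.
  intros [_ Df] x. destruct (Df (norm x)) as [M [m [_ [_ G]]]].
  destruct (G x (Rle_refl _)) as [L [HL _]].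
  apply (filterdiff_continuous (K:=C_AbsRing) (U:=C2) (V:=C2)). exists L. exact HL.
Qed.

Lemma Good_iter (f : C2 -> C2) (n : nat) : Good f -> Good (Nat.iter n f).
Proof.
  intros Hf. induction n as [|n IH]; simpl.
  - apply Good_id.
  - apply (Good_comp (Nat.iter n f) f); assumption.
Qed.

Lemma g_ginv_good (d : nat) (g ginv : C2 -> C2) :
  in_Hd d g -> (forall p, ginv (g p) = p /\ g (ginv p) = p) -> Good g /\ Good ginv.
Proof.
  intros [l [Hl [_ Hg]]] Hinv. split.
  - apply Good_ext with (henon_comp l). apply Good_henon_comp, Hl. intro y; symmetry; apply Hg.
  - apply Good_ext with (invcomp l). apply Good_invcomp, Hl.
    intro y. rewrite <- (comp_invcomp l y Hl) at 2. rewrite <- Hg. symmetry. apply Hinv.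
Qed.


Lemma norm_split (x y : C2) : norm y <= norm x + norm (minus y x).
Proof.
  assert (E : y = plus x (minus y x)) by c2alg. rewrite E at 1. apply norm_triangle.
Qed.

Lemma ball_norm (x y : C2) (e : posreal) : ball x e y -> norm y <= norm x + norm_factor (K:=C_AbsRing) (V:=C2) * e.
Proof. intro H. pose proof (norm_compat2 x y e H). pose proof (norm_split x y). lra. Qed.

Lemma loc_center (x : C2) (P : C2 -> Prop) : locally x P -> P x.
Proof. intros [e He]. apply He. apply ball_center. Qed.

Lemma open_loc (q : C2) (e : R) (C : Prop) : open (fun x : C2 => locally x (ball q e) /\ C).
Proof.
  apply open_and.
  - intros x Hx. apply locally_locally. exact Hx.
  - destruct (classic C) as [HC|HC].
    + apply open_ext with (fun _ => True). intros; tauto. apply open_true.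
    + apply open_ext with (fun _ => False). intros; tauto. apply open_false.
Qed.

Fixpoint lmax {A} (h : A -> nat) (l : list A) : nat :=
  match l with nil => 0%nat | a :: l' => Nat.max (h a) (lmax h l') end.
Lemma lmax_in {A} (h : A -> nat) (l : list A) a : In a l -> (h a <= lmax h l)%nat.
Proof. induction l as [|b l IH]; simpl. tauto. intros [->|H]. lia. specialize (IH H). lia. Qed.

Lemma compact_bounded (V : C2 -> Prop) : is_compact V -> exists R, forall p, V p -> norm p <= R.
Proof.
  intros HV.
  set (nf := norm_factor (K:=C_AbsRing) (V:=C2)).
  assert (Hnf : 0 < nf) by apply norm_factor_gt_0.
  destruct (HV nat (fun k x => locally x (ball (zero : C2) (INR k + 1)) /\ True)) as [l Hl].
  - intro k. apply open_loc.
  - intros p _. destruct (archimed (norm p + nf)) as [Hk _].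
    assert (H0 : 0 <= IZR (up (norm p + nf))) by (pose proof (norm_ge_0 p); lra).
    exists (Z.to_nat (up (norm p + nf))). split; [|exact I].
    rewrite INR_IZR_INZ, Z2Nat.id by (apply le_IZR; lra).
    exists (mkposreal 1 Rlt_0_1). intros y Hy. apply (norm_compat1 (K:=C_AbsRing) (V:=C2)). match goal with |- context [minus y ?z] => replace (minus y z) with y by (symmetry; apply (minus_zero_r (G:=NormedModule.AbelianGroup C_AbsRing C2))) end.
    pose proof (ball_norm p y _ Hy). simpl in H. fold nf in H. lra.
  - exists (nf * (INR (lmax (fun k => k) l) + 1)). intros p Hp.
    destruct (Hl p Hp) as [k [Hk [Hb _]]]. apply loc_center in Hb.
    assert (Hpos : 0 < INR k + 1) by (pose proof (pos_INR k); lra).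
    pose proof (norm_compat2 (K:=C_AbsRing) (V:=C2) zero p (mkposreal _ Hpos) Hb) as H. simpl in H. match type of H with context [minus p ?z] => replace (minus p z) with p in H by (symmetry; apply (minus_zero_r (G:=NormedModule.AbelianGroup C_AbsRing C2))) end.
    pose proof (lmax_in (fun k => k) l k Hk) as Hm. apply le_INR in Hm. simpl in Hm. fold nf in H. nra.
Qed.

Lemma iter_cont (h : C2 -> C2) : (forall x, continuous h x) -> forall k x, continuous (Nat.iter k h) x.
Proof.
  intros Hh k. induction k as [|k IH]; intro x; simpl.
  - intros P HP. exact HP.
  - apply (continuous_comp (Nat.iter k h) h). apply IH. apply Hh.
Qed.

Lemma cont_ball (h : C2 -> C2) (x : C2) (e : posreal) : continuous h x ->
  exists d : posreal, forall y, ball x d y -> ball (h x) e (h y).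
Proof. intros Hc. destruct (Hc _ (locally_ball (h x) e)) as [d Hd]. exists d. exact Hd. Qed.

Lemma boundary_closed (A : C2 -> Prop) (p : C2) : ~ boundary A p ->
  exists e : posreal, forall q, ball p e q -> ~ boundary A q.
Proof.
  intros Hn. apply not_all_ex_not in Hn. destruct Hn as [eps Heps].
  assert (He2 : 0 < eps / 2) by (destruct eps; simpl; lra).
  exists (mkposreal _ He2). intros q Hq Hbq. simpl in Hq.
  destruct (Hbq (mkposreal _ He2)) as [[q1 [H1 A1]] [q2 [H2 A2]]]. simpl in H1, H2.
  apply Heps. split.
  - exists q1. split; [|exact A1]. replace (pos eps) with (eps / 2 + eps / 2) by field.
    apply ball_triangle with q; assumption.
  - exists q2. split; [|exact A2]. replace (pos eps) with (eps / 2 + eps / 2) by field.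
    apply ball_triangle with q; assumption.
Qed.

Lemma iter_inv (f finv : C2 -> C2) : (forall p, finv (f p) = p) ->
  forall k y, Nat.iter k finv (Nat.iter k f y) = y.
Proof.
  intros H k. induction k as [|k IH]; intro y. reflexivity.
  rewrite (Nat.iter_succ_r k C2 finv). rewrite (Nat.iter_succ k C2 f). rewrite H. apply IH.
Qed.

Section Dyn.
Variables (f finv : C2 -> C2) (J : C2 -> Prop).
Hypothesis Hf : Good f.
Hypothesis Hfi : forall x, continuous finv x.
Hypothesis Hinv : forall p, finv (f p) = p.
Hypothesis Jcl : forall p, ~ J p -> exists e : posreal, forall q, ball p e q -> ~ J q.

Definition Kab (p : C2) := bounded_orbit f p /\ bounded_orbit finv p.

Definition finv_V (V : C2 -> Prop) := forall p, J p -> V p -> J (f p) /\ V (f p).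

Lemma orbit_inv (V : C2 -> Prop) : finv_V V -> forall p, J p -> V p -> forall n, J (Nat.iter n f p) /\ V (Nat.iter n f p).
Proof.
  intros HV p Jp Vp n. induction n as [|n IH]; simpl. auto. apply HV; apply IH.
Qed.

Lemma accum (V : C2 -> Prop) (p : C2) : is_compact V -> (forall n, V (Nat.iter n f p)) ->
  exists q, V q /\ forall (e : posreal) (N : nat), exists n, (N <= n)%nat /\ ball q e (Nat.iter n f p).
Proof.
  intros HV Hp. apply NNPP. intro Hn.
  assert (H : forall q, V q -> exists (e : posreal) (N : nat), forall n, (N <= n)%nat -> ~ ball q e (Nat.iter n f p)).
  { intros q Hq. apply NNPP. intro H2. apply Hn. exists q. split; auto. intros e N. apply NNPP. intro H3.
    apply H2. exists e, N. intros n Hn' Hb. apply H3. exists n. auto. }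
  destruct (HV (C2 * posreal * nat)%type
     (fun i x => locally x (ball (fst (fst i)) (snd (fst i))) /\
                 (forall n, (snd i <= n)%nat -> ~ ball (fst (fst i)) (snd (fst i)) (Nat.iter n f p))))
     as [l Hl].
  - intro i. apply open_loc.
  - intros x Hx. destruct (H x Hx) as [e [N HN]]. exists (x, e, N). simpl. split; [apply locally_ball|exact HN].
  - set (M := lmax (fun i : C2 * posreal * nat => snd i) l).
    destruct (Hl _ (Hp M)) as [i [Hi [Hb HN]]]. apply loc_center in Hb.
    apply (HN M). apply (lmax_in (fun i : C2 * posreal * nat => snd i) l i Hi). exact Hb.
Qed.

Lemma local_transfer (V1 V2 : C2 -> Prop) :
  is_compact V1 -> finv_V V1 -> finv_V V2 -> (forall p, Kab p -> interior V2 p) ->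
  forall p, J p -> V1 p -> exists (d : posreal) (n : nat), forall r, ball p d r -> J r -> V1 r ->
     forall m, (n <= m)%nat -> J (Nat.iter m f r) /\ V2 (Nat.iter m f r).
Proof.
  intros C1 I1 I2 KV p Jp Vp.
  destruct (compact_bounded V1 C1) as [R1 HR1].
  set (nf := norm_factor (K:=C_AbsRing) (V:=C2)).
  pose proof (orbit_inv V1 I1 p Jp Vp) as Orb.
  destruct (accum V1 p C1 (fun n => proj2 (Orb n))) as [q [Vq Hq]].
  assert (Kq : Kab q).
  { split.
    - exists (R1 + nf * 1). intro k.
      destruct (cont_ball (Nat.iter k f) q (mkposreal 1 Rlt_0_1) (iter_cont f (Good_cont f Hf) k q)) as [d Hd].
      destruct (Hq d 0%nat) as [n [_ Hn]].
      pose proof (Hd _ Hn) as B. apply ball_sym in B.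
      pose proof (ball_norm _ _ (mkposreal 1 Rlt_0_1) B) as Hb. simpl in Hb.
      rewrite <- Nat.iter_add in Hb. pose proof (HR1 _ (proj2 (Orb (k + n)%nat))) as HH. fold nf in Hb. eapply Rle_trans; [exact Hb|]. apply Rplus_le_compat_r. exact HH.
    - exists (R1 + nf * 1). intro k.
      destruct (cont_ball (Nat.iter k finv) q (mkposreal 1 Rlt_0_1) (iter_cont finv Hfi k q)) as [d Hd].
      destruct (Hq d k) as [n [Hkn Hn]].
      pose proof (Hd _ Hn) as B. apply ball_sym in B.
      pose proof (ball_norm _ _ (mkposreal 1 Rlt_0_1) B) as Hb. simpl in Hb.
      replace n with (k + (n - k))%nat in Hb by lia. rewrite Nat.iter_add, iter_inv in Hb by exact Hinv.
      pose proof (HR1 _ (proj2 (Orb (n - k)%nat))) as HH. fold nf in Hb. eapply Rle_trans; [exact Hb|]. apply Rplus_le_compat_r. exact HH. }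
  destruct (KV q Kq) as [eps Heps].
  assert (He2 : 0 < eps / 2) by (destruct eps; simpl; lra).
  destruct (Hq (mkposreal _ He2) 0%nat) as [n [_ Hn]].
  destruct (cont_ball (Nat.iter n f) p (mkposreal _ He2) (iter_cont f (Good_cont f Hf) n p)) as [d Hd].
  exists d, n. intros r Hr Jr Vr m Hm.
  assert (V2n : V2 (Nat.iter n f r)).
  { apply Heps. replace (pos eps) with (eps / 2 + eps / 2) by field.
    apply ball_triangle with (Nat.iter n f p). exact Hn. apply Hd, Hr. }
  pose proof (orbit_inv V1 I1 r Jr Vr n) as [Jn _].
  pose proof (orbit_inv V2 I2 _ Jn V2n (m - n)%nat) as H.
  rewrite <- Nat.iter_add in H. replace (m - n + n)%nat with m in H by lia. exact H.
Qed.

Lemma transfer (V1 V2 : C2 -> Prop) :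
  is_compact V1 -> finv_V V1 -> finv_V V2 -> (forall p, Kab p -> interior V2 p) ->
  exists N, forall p, J p -> V1 p -> J (Nat.iter N f p) /\ V2 (Nat.iter N f p).
Proof.
  intros C1 I1 I2 KV.
  destruct (C1 (C2 * posreal * nat)%type
     (fun i x => locally x (ball (fst (fst i)) (snd (fst i))) /\
        (forall r, ball (fst (fst i)) (snd (fst i)) r -> J r -> V1 r ->
          forall m, (snd i <= m)%nat -> J (Nat.iter m f r) /\ V2 (Nat.iter m f r))))
     as [l Hl].
  - intro i. apply open_loc.
  - intros x Hx. destruct (classic (J x)) as [Jx|Jx].
    + destruct (local_transfer V1 V2 C1 I1 I2 KV x Jx Hx) as [d [n H]].
      exists (x, d, n). simpl. split; [apply locally_ball|exact H].
    + destruct (Jcl x Jx) as [e He]. exists (x, e, 0%nat). simpl. split; [apply locally_ball|].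
      intros r Hr Jr. exfalso. exact (He r Hr Jr).
  - exists (lmax (fun i : C2 * posreal * nat => snd i) l). intros p Jp Vp.
    destruct (Hl p Vp) as [i [Hi [Hb H]]]. apply loc_center in Hb.
    apply H; auto. apply (lmax_in (fun i : C2 * posreal * nat => snd i) l i Hi).
Qed.

End Dyn.


Lemma LimSup_plus_const (v : nat -> R) (c : R) :
  LimSup_seq (fun n => v n + c) = Rbar_plus (LimSup_seq v) c.
Proof.
  destruct (ex_LimSup_seq v) as [l Hl]. rewrite (is_LimSup_seq_unique _ _ Hl).
  apply is_LimSup_seq_unique. destruct l as [l| |]; simpl in *.
  - intro eps. destruct (Hl eps) as [H1 [N H2]]. split.
    + intro N0. destruct (H1 N0) as [n [Hn H]]. exists n. split; [auto|lra].
    + exists N. intros n Hn. specialize (H2 n Hn). lra.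
  - intros M N. destruct (Hl (M - c) N) as [n [Hn H]]. exists n. split; [auto|lra].
  - intros M. destruct (Hl (M - c)) as [N H]. exists N. intros n Hn. specialize (H n Hn). lra.
Qed.

Lemma LimSup_shift (u : nat -> R) (N : nat) : LimSup_seq (fun n => u (n + N)%nat) = LimSup_seq u.
Proof.
  destruct (ex_LimSup_seq u) as [l Hl]. rewrite (is_LimSup_seq_unique _ _ Hl).
  apply is_LimSup_seq_unique. apply is_LimSup_seq_ind_k. exact Hl.
Qed.

Lemma Rbar_le_eps (A B : Rbar) : (forall eps : posreal, Rbar_le A (Rbar_plus B eps)) -> Rbar_le A B.
Proof.
  intros H. destruct A as [a| |], B as [b| |]; simpl in *; auto.
  - apply Rnot_lt_le. intro Hlt. assert (He : 0 < (a - b) / 2) by lra.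
    specialize (H (mkposreal _ He)). simpl in H. lra.
  - exact (H (mkposreal 1 Rlt_0_1)).
  - exact (H (mkposreal 1 Rlt_0_1)).
  - exact (H (mkposreal 1 Rlt_0_1)).
Qed.

Lemma limsup_cmp (u v : nat -> R) (N1 N2 : nat) (K : R) : 0 <= K ->
  (forall n, (1 <= n)%nat -> u (n + N1)%nat <= v (n + N2)%nat + K / INR n) ->
  Rbar_le (LimSup_seq u) (LimSup_seq v).
Proof.
  intros HK H. rewrite <- (LimSup_shift u N1), <- (LimSup_shift v N2).
  apply Rbar_le_eps. intro eps. rewrite <- LimSup_plus_const.
  apply LimSup_le.
  destruct (archimed (K / eps)) as [Ha _].
  assert (H0 : 0 <= K / eps) by (apply Rdiv_le_0_compat; [lra| apply cond_pos]).
  exists (S (Z.to_nat (up (K / eps)))). intros n Hn.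
  eapply Rle_trans. apply H. lia. apply Rplus_le_compat_l.
  assert (Hz : (0 <= up (K / eps))%Z) by (apply le_IZR; lra).
  assert (E : INR (Z.to_nat (up (K / eps))) = IZR (up (K / eps))) by (rewrite INR_IZR_INZ, Z2Nat.id; auto).
  apply le_INR in Hn. rewrite S_INR, E in Hn.
  assert (Hpn : 0 < INR n) by lra. pose proof (cond_pos eps).
  apply Rmult_le_reg_r with (INR n); [exact Hpn|].
  replace (K / INR n * INR n) with K by (field; lra).
  replace K with (K / eps * eps) at 1 by (field; lra). nra.
Qed.

Lemma liminf_cmp (u v : nat -> R) (N1 N2 : nat) (K : R) : 0 <= K ->
  (forall n, (1 <= n)%nat -> u (n + N1)%nat <= v (n + N2)%nat + K / INR n) ->
  Rbar_le (LimInf_seq u) (LimInf_seq v).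
Proof.
  intros HK H.
  apply Rbar_opp_le. rewrite <- !LimSup_seq_opp.
  apply (limsup_cmp _ _ N2 N1 K HK). intros n Hn. specialize (H n Hn). lra.
Qed.

Lemma lim_eq (x y : nat -> R) (N1 N2 : nat) (K : R) : 0 <= K ->
  (forall n, (1 <= n)%nat -> x (n + N1)%nat <= y n + K / INR n) ->
  (forall n, (1 <= n)%nat -> y (n + N2)%nat <= x n + K / INR n) ->
  Lim_seq x = Lim_seq y.
Proof.
  intros HK H1 H2. unfold Lim_seq.
  assert (E1 : (forall n, (1 <= n)%nat -> x (n + N1)%nat <= y (n + 0)%nat + K / INR n)) by (intros; rewrite Nat.add_0_r; auto).
  assert (E2 : (forall n, (1 <= n)%nat -> y (n + N2)%nat <= x (n + 0)%nat + K / INR n)) by (intros; rewrite Nat.add_0_r; auto).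
  rewrite (Rbar_le_antisym (LimSup_seq x) (LimSup_seq y)).
  rewrite (Rbar_le_antisym (LimInf_seq x) (LimInf_seq y)). reflexivity.
  apply (liminf_cmp _ _ _ _ K HK E1). apply (liminf_cmp _ _ _ _ K HK E2).
  apply (limsup_cmp _ _ _ _ K HK E1). apply (limsup_cmp _ _ _ _ K HK E2).
Qed.

Lemma step_ineq (A Lb c B K nn NN : R) : 1 <= nn -> 0 <= NN -> 0 <= B ->
  A <= c + Lb -> - (nn * B) <= Lb -> Rabs c + NN * B <= K ->
  / (nn + NN) * A <= / nn * Lb + K / nn.
Proof.
  intros Hn HN HB HA HL HK.
  assert (Hp : 0 < nn * (nn + NN)) by nra.
  apply Rmult_le_reg_l with (nn * (nn + NN)); [exact Hp|].
  replace (nn * (nn + NN) * (/ (nn + NN) * A)) with (nn * A) by (field; lra).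
  replace (nn * (nn + NN) * (/ nn * Lb + K / nn)) with ((nn + NN) * (Lb + K)) by (field; lra).
  pose proof (Rle_abs c).
  assert (NN * (Lb + nn * B) >= 0) by nra.
  assert (NN * K >= 0) by (assert (0 <= Rabs c) by apply Rabs_pos; nra).
  nra.
Qed.

Lemma ln_bounds (a : nat -> R) (m M : R) : 0 < m -> 0 < M -> (forall n, m ^ n <= a n <= M ^ n) ->
  forall n, 0 < a n /\ - (INR n * (Rabs (ln m) + Rabs (ln M))) <= ln (a n) /\ ln (a n) <= INR n * (Rabs (ln m) + Rabs (ln M)).
Proof.
  intros Hm HM H n. destruct (H n) as [H1 H2].
  assert (Hp : 0 < m ^ n) by (apply pow_lt; lra).
  split; [lra|]. pose proof (pos_INR n).
  pose proof (ln_le _ _ Hp H1) as L1. pose proof (ln_le _ _ (Rlt_le_trans _ _ _ Hp H1) H2) as L2.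
  rewrite ln_pow in L1, L2 by lra.
  pose proof (Rabs_pos (ln m)). pose proof (Rabs_pos (ln M)).
  pose proof (Rle_abs (ln M)). pose proof (Rle_abs (- ln m)) as Hx. rewrite Rabs_Ropp in Hx.
  split; nra.
Qed.

Lemma seq_main (a b : nat -> R) (m1 M1 m2 M2 C1 C2 : R) (N1 N2 : nat) :
  0 < m1 -> 0 < M1 -> 0 < m2 -> 0 < M2 -> 0 < C1 -> 0 < C2 ->
  (forall n, m1 ^ n <= a n <= M1 ^ n) -> (forall n, m2 ^ n <= b n <= M2 ^ n) ->
  (forall n, a (n + N1)%nat <= C1 * b n) -> (forall n, b (n + N2)%nat <= C2 * a n) ->
  Lim_seq (fun n => / INR n * ln (a n)) = Lim_seq (fun n => / INR n * ln (b n)).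
Proof.
  intros Hm1 HM1 Hm2 HM2 HC1 HC2 Ha Hb H1 H2.
  set (B := Rabs (ln m1) + Rabs (ln M1) + (Rabs (ln m2) + Rabs (ln M2))).
  set (K := Rabs (ln C1) + Rabs (ln C2) + (INR N1 + INR N2) * B).
  pose proof (ln_bounds a m1 M1 Hm1 HM1 Ha) as La.
  pose proof (ln_bounds b m2 M2 Hm2 HM2 Hb) as Lb.
  pose proof (Rabs_pos (ln m1)). pose proof (Rabs_pos (ln M1)).
  pose proof (Rabs_pos (ln m2)). pose proof (Rabs_pos (ln M2)).
  pose proof (Rabs_pos (ln C1)). pose proof (Rabs_pos (ln C2)).
  pose proof (pos_INR N1). pose proof (pos_INR N2).
  assert (HB : 0 <= B) by (unfold B; lra).
  assert (HK : 0 <= K) by (unfold K; nra).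
  apply (lim_eq _ _ N1 N2 K HK).
  - intros n Hn. rewrite plus_INR.
    destruct (La (n + N1)%nat) as [Pa _]. destruct (Lb n) as [Pb [Lb1 _]].
    apply (step_ineq _ _ (ln C1) B); try lra.
    + apply (le_INR 1) in Hn. simpl in Hn. lra.
    + rewrite <- ln_mult by lra. apply ln_le; auto.
    + eapply Rle_trans; [|exact Lb1]. apply Ropp_le_contravar. apply Rmult_le_compat_l. apply pos_INR. unfold B; lra.
    + unfold K. nra.
  - intros n Hn. rewrite plus_INR.
    destruct (Lb (n + N2)%nat) as [Pb _]. destruct (La n) as [Pa [La1 _]].
    apply (step_ineq _ _ (ln C2) B); try lra.
    + apply (le_INR 1) in Hn. simpl in Hn. lra.
    + rewrite <- ln_mult by lra. apply ln_le; auto.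
    + eapply Rle_trans; [|exact La1]. apply Ropp_le_contravar. apply Rmult_le_compat_l. apply pos_INR. unfold B; lra.
    + unfold K. nra.
Qed.


Lemma GD_ext f h q M m : GD f q M m -> (forall y, f y = h y) -> GD h q M m.
Proof. intros [L [H1 H2]] E. exists L. split; auto. apply filterdiff_ext with f; auto. Qed.

Lemma GD_iter (f : C2 -> C2) (J V : C2 -> Prop) (M m R : R) :
  finv_V f J V -> (forall p, V p -> norm p <= R) -> 0 < M -> 0 < m ->
  (forall q, norm q <= R -> GD f q M m) ->
  forall n p, J p -> V p -> GD (Nat.iter n f) p (M ^ n) (m ^ n).
Proof.
  intros HV HR HM Hm HG n. induction n as [|n IH]; intros p Jp Vp.
  - exists (fun v => v). simpl. split; [apply filterdiff_id|]. split; intro; lra.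
  - destruct (HV p Jp Vp) as [J1 V1].
    apply GD_ext with (fun y => Nat.iter n f (f y)).
    + replace (M ^ S n) with (M ^ n * M) by (simpl; ring). replace (m ^ S n) with (m ^ n * m) by (simpl; ring).
      apply GD_comp. apply pow_le; lra. apply pow_le; lra. apply HG, HR, Vp. apply IH; auto.
    + intro y. symmetry. apply Nat.iter_succ_r.
Qed.

Lemma der_bounds (f : C2 -> C2) (q : C2) (M m : R) (L : C2 -> C2) :
  GD f q M m -> filterdiff (K:=C_AbsRing) (U:=C2) (V:=C2) f (locally q) L ->
  is_linear L /\ forall v, m * norm v <= norm (L v) <= M * norm v.
Proof.
  intros [L0 [H0 [U0 W0]]] HL. split; [apply HL|]. intro v.
  rewrite <- (fd_unique f q L0 L H0 HL v). auto.
Qed.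

Lemma opn_in (L : C2 -> C2) (M m : R) : 0 <= M -> is_linear L ->
  (forall v, m * norm v <= norm (L v) <= M * norm v) ->
  exists x, opnorm L = Finite x /\ m <= x <= M.
Proof.
  intros HM HL Hb. destruct (opnorm_bound L M HM HL (fun v => proj2 (Hb v))) as [x [Hx [HxM Hv]]].
  exists x. split; [exact Hx|]. split; [|exact HxM].
  set (e1 := (RtoC 1, RtoC 0) : C2).
  assert (Ne : norm e1 = 1) by apply norm_e1.
  pose proof (Hb e1) as [H1 _]. rewrite Ne in H1.
  pose proof (Hv e1 (Req_le _ _ Ne)). lra.
Qed.

Lemma lub_fin (E : R -> Prop) (lo hi : R) : (exists r, E r) -> (forall r, E r -> lo <= r <= hi) ->
  exists s, Lub_Rbar E = Finite s /\ lo <= s <= hi /\ (forall r, E r -> r <= s) /\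
    (forall B, (forall r, E r -> r <= B) -> s <= B).
Proof.
  intros [r0 Hr0] Hb. destruct (Lub_Rbar_correct E) as [Hub Hl].
  set (l := Lub_Rbar E) in *.
  assert (H0 : Rbar_le r0 l) by (apply Hub; exact Hr0).
  assert (H1 : Rbar_le l hi) by (apply Hl; intros r Hr; simpl; apply Hb, Hr).
  destruct l as [s| |]; simpl in H0, H1; try contradiction.
  exists s. split; [reflexivity|]. split; [split; [specialize (Hb r0 Hr0); lra|exact H1]|]. split.
  - intros r Hr. exact (Hub r Hr).
  - intros B HB. exact (Hl B HB).
Qed.

Definition Eset (f : C2 -> C2) (J V : C2 -> Prop) (n : nat) : R -> Prop :=
  fun r => exists p, J p /\ V p /\ exists L : C2 -> C2,
     filterdiff (K := C_AbsRing) (Nat.iter n f) (locally p) L /\ r = real (opnorm L).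

Lemma maxDer_facts (f : C2 -> C2) (J V : C2 -> Prop) (M m R : R) :
  finv_V f J V -> (forall p, V p -> norm p <= R) -> 0 < M -> 0 < m ->
  (forall q, norm q <= R -> GD f q M m) -> (exists p, J p /\ V p) ->
  forall n, m ^ n <= maxDer f J V n <= M ^ n /\ (forall r, Eset f J V n r -> r <= maxDer f J V n) /\
    (forall B, (forall r, Eset f J V n r -> r <= B) -> maxDer f J V n <= B).
Proof.
  intros HV HR HM Hm HG [p0 [J0 V0]] n.
  assert (Hb : forall r, Eset f J V n r -> m ^ n <= r <= M ^ n).
  { intros r [p [Jp [Vp [L [HL ->]]]]].
    pose proof (GD_iter f J V M m R HV HR HM Hm HG n p Jp Vp) as G.
    destruct (der_bounds _ _ _ _ L G HL) as [Lin Bd].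
    destruct (opn_in L (M ^ n) (m ^ n) (pow_le _ _ (Rlt_le _ _ HM)) Lin Bd) as [x [Hx Hxb]].
    rewrite Hx. simpl. exact Hxb. }
  assert (Hne : exists r, Eset f J V n r).
  { destruct (GD_iter f J V M m R HV HR HM Hm HG n p0 J0 V0) as [L [HL _]].
    exists (real (opnorm L)). exists p0. repeat split; auto. exists L. auto. }
  destruct (lub_fin _ _ _ Hne Hb) as [s [Hs [Hsb [Hup Hle]]]].
  unfold maxDer. fold (Eset f J V n). rewrite Hs. simpl. auto.
Qed.

Lemma compare (f : C2 -> C2) (J V1 V2 : C2 -> Prop) (M1 m1 R1 M2 m2 R2 : R) (N : nat) :
  finv_V f J V1 -> finv_V f J V2 ->
  (forall p, V1 p -> norm p <= R1) -> (forall p, V2 p -> norm p <= R2) ->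
  0 < M1 -> 0 < m1 -> 0 < M2 -> 0 < m2 ->
  (forall q, norm q <= R1 -> GD f q M1 m1) -> (forall q, norm q <= R2 -> GD f q M2 m2) ->
  (forall p, J p -> V1 p -> J (Nat.iter N f p) /\ V2 (Nat.iter N f p)) ->
  (exists p, J p /\ V1 p) ->
  forall n, maxDer f J V1 (n + N) <= M1 ^ N * maxDer f J V2 n.
Proof.
  intros I1 I2 HR1 HR2 HM1 Hm1 HM2 Hm2 G1 G2 T [p0 [J0 V0]] n.
  assert (Ne2 : exists p, J p /\ V2 p) by (exists (Nat.iter N f p0); apply T; auto).
  pose proof (maxDer_facts f J V1 M1 m1 R1 I1 HR1 HM1 Hm1 G1 (ex_intro _ p0 (conj J0 V0)) (n + N)) as [_ [_ Hle1]].
  pose proof (maxDer_facts f J V2 M2 m2 R2 I2 HR2 HM2 Hm2 G2 Ne2 n) as [[Hpos2 _] [Hup2 _]].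
  assert (Hp2 : 0 <= maxDer f J V2 n) by (pose proof (pow_lt m2 n Hm2); lra).
  apply Hle1. intros r [p [Jp [Vp [L [HL ->]]]]].
  destruct (T p Jp Vp) as [Jq Vq].
  destruct (GD_iter f J V1 M1 m1 R1 I1 HR1 HM1 Hm1 G1 N p Jp Vp) as [L1 [HL1 [U1 _]]].
  pose proof (GD_iter f J V2 M2 m2 R2 I2 HR2 HM2 Hm2 G2 n _ Jq Vq) as GG2.
  destruct GG2 as [L2 [HL2 [U2 W2]]].
  assert (Lin2 : is_linear L2) by apply HL2.
  destruct (opn_in L2 (M2 ^ n) (m2 ^ n) (pow_le _ _ (Rlt_le _ _ HM2)) Lin2 (fun v => conj (W2 v) (U2 v))) as [x2 [Hx2 _]].
  assert (Hx2le : x2 <= maxDer f J V2 n).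
  { apply Hup2. exists (Nat.iter N f p). split; [exact Jq|]. split; [exact Vq|]. exists L2. split; [exact HL2|].
    rewrite Hx2. reflexivity. }
  assert (HC : filterdiff (K:=C_AbsRing) (U:=C2) (V:=C2) (Nat.iter (n + N) f) (locally p) (fun y => L2 (L1 y))).
  { apply filterdiff_ext with (fun y => Nat.iter n f (Nat.iter N f y)).
    intro y. symmetry. apply Nat.iter_add.
    apply filterdiff_comp'; assumption. }
  assert (Hu : forall v, L v = L2 (L1 v)) by (apply (fd_unique (Nat.iter (n + N) f) p); assumption).
  assert (Lin : is_linear L) by apply HL.
  assert (Hbd : forall v, norm (L v) <= (maxDer f J V2 n * M1 ^ N) * norm v).
  { intro v. rewrite Hu. eapply Rle_trans. apply (opnorm_scale L2 x2 Lin2 Hx2).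
    pose proof (norm_ge_0 (L1 v)). pose proof (U1 v).
    apply Rle_trans with (maxDer f J V2 n * norm (L1 v)). apply Rmult_le_compat_r; lra.
    rewrite Rmult_assoc. apply Rmult_le_compat_l; lra. }
  assert (H0 : 0 <= maxDer f J V2 n * M1 ^ N) by (apply Rmult_le_pos; [lra| apply pow_le; lra]).
  destruct (opnorm_bound L _ H0 Lin Hbd) as [y [Hy [Hyle _]]].
  rewrite Hy. simpl. lra.
Qed.

Lemma s_eq (f finv : C2 -> C2) (J V1 V2 : C2 -> Prop) :
  Good f -> (forall x, continuous finv x) -> (forall p, finv (f p) = p) ->
  (forall p, ~ J p -> exists e : posreal, forall q, ball p e q -> ~ J q) ->
  is_compact V1 -> is_compact V2 -> finv_V f J V1 -> finv_V f J V2 ->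
  (forall p, Kab f finv p -> interior V1 p) -> (forall p, Kab f finv p -> interior V2 p) ->
  s_exp f J V1 = s_exp f J V2.
Proof.
  intros Hf Hfi Hinv Jcl C1 C2' I1 I2 K1 K2.
  destruct (transfer f finv J Hf Hfi Hinv Jcl V1 V2 C1 I1 I2 K2) as [N12 T12].
  destruct (transfer f finv J Hf Hfi Hinv Jcl V2 V1 C2' I2 I1 K1) as [N21 T21].
  destruct (compact_bounded V1 C1) as [R1 HR1]. destruct (compact_bounded V2 C2') as [R2 HR2].
  destruct Hf as [_ Df].
  destruct (Df R1) as [M1 [m1 [HM1 [Hm1 G1]]]]. destruct (Df R2) as [M2 [m2 [HM2 [Hm2 G2]]]].
  destruct (classic (exists p, J p /\ V1 p)) as [Ne1|Ne1].
  - assert (Ne2 : exists p, J p /\ V2 p) by (destruct Ne1 as [p0 [J0 V0]]; exists (Nat.iter N12 f p0); apply T12; auto).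
    unfold s_exp.
    apply (seq_main _ _ m1 M1 m2 M2 (M1 ^ N12) (M2 ^ N21) N12 N21); try assumption; try (apply pow_lt; assumption).
    + intro n. apply (maxDer_facts f J V1 M1 m1 R1 I1 HR1 HM1 Hm1 G1 Ne1 n).
    + intro n. apply (maxDer_facts f J V2 M2 m2 R2 I2 HR2 HM2 Hm2 G2 Ne2 n).
    + intro n. apply (compare f J V1 V2 M1 m1 R1 M2 m2 R2 N12); assumption.
    + intro n. apply (compare f J V2 V1 M2 m2 R2 M1 m1 R1 N21); assumption.
  - assert (Ne2 : ~ exists p, J p /\ V2 p).
    { intros [p [Jp Vp]]. apply Ne1. exists (Nat.iter N21 f p). apply T21; auto. }
    unfold s_exp. apply Lim_seq_ext. intro n. unfold maxDer. f_equal. f_equal. f_equal.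
    apply Lub_Rbar_eqset. intro x. split; intros [p [Jp [Vp _]]]; exfalso; eauto.
Qed.

Theorem proposition5p1 (d : nat) (g ginv : C2 -> C2) :
  (2 <= d)%nat ->
  in_Hd d g ->
  (forall p, ginv (g p) = p /\ g (ginv p) = p) ->
  forall V1 V2 : C2 -> Prop,
    admissible g ginv V1 -> admissible g ginv V2 ->
    splus g ginv V1 = splus g ginv V2 /\ sminus g ginv V1 = sminus g ginv V2.
Proof.
  intros _ Hd Hinv V1 V2 [C1 [K1 [P1 M1]]] [C2' [K2 [P2 M2]]].
  destruct (g_ginv_good d g ginv Hd Hinv) as [Gg Gi].
  split.
  - unfold splus. apply (s_eq g ginv).
    + exact Gg.
    + apply Good_cont, Gi.
    + intro p. apply Hinv.
    + intros p Hp. apply boundary_closed, Hp.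
    + exact C1.
    + exact C2'.
    + intros p Jp Vp. apply P1; assumption.
    + intros p Jp Vp. apply P2; assumption.
    + intros p Kp. apply K1. exact Kp.
    + intros p Kp. apply K2. exact Kp.
  - unfold sminus. apply (s_eq ginv g).
    + exact Gi.
    + apply Good_cont, Gg.
    + intro p. apply Hinv.
    + intros p Hp. apply boundary_closed, Hp.
    + exact C1.
    + exact C2'.
    + intros p Jp Vp. apply M1; assumption.
    + intros p Jp Vp. apply M2; assumption.
    + intros p [Ka Kb]. apply K1. split; assumption.
    + intros p [Ka Kb]. apply K2. split; assumption.
Qed.
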